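(* The generating function $$F_{(213,312)}(x,p,q,u,v,s,t)=\sum_{n\ge0}\ \sum_{\pi\in S_n(213,312)} x^n p^{\operatorname{asc}(\pi)}q^{\operatorname{des}(\pi)}u^{\operatorname{lrmax}(\pi)}v^{\operatorname{rlmax}(\pi)}s^{\operatorname{lrmin}(\pi)}t^{\operatorname{rlmin}(\pi)}$$ is equal to $$1 + xuvst + \frac{p q s t^2 u^2 v^2 x^3}{(-1 + p t u x) (-1 + p u x + q v x)} + \frac{q s^2 t u v^2 x^2}{1 - q s v x} + \frac{p s t^2 u^2 v x^2}{1 - p t u x} + \frac{p q s^2 t u^2 v^2 x^3}{(-1 + p u x + q v x) (-1 + q s v x)}.$$
   Context: For $n\ge 0$, $S_n$ denotes the set of permutations $\pi=\pi_1\cdots\pi_n$ of $[n]=\{1,\dots,n\}$ ($S_0$ consists of the empty permutation, for which all statistics are $0$). $\pi$ avoids a pattern $\tau\in S_k$ if no subsequence $\pi_{i_1}\cdots\pi_{i_k}$ ($i_1<\dots<i_k$) satisfies $\pi_{i_a}<\pi_{i_b}\iff\tau_a<\tau_b$; $S_n(\tau,\rho)$ is the set of permutations in $S_n$ avoiding both $\tau$ and $\rho$. $\operatorname{asc}(\pi)$ (resp. $\operatorname{des}(\pi)$) is the number of $i\in[n-1]$ with $\pi_i<\pi_{i+1}$ (resp. $\pi_i>\pi_{i+1}$). $\pi_i$ is a left-to-right maximum (resp. minimum) if it is larger (resp. smaller) than every $\pi_j$ with $j<i$, and a right-to-left maximum (resp. minimum) if it is larger (resp. smaller) than every $\pi_j$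 with $j>i$; $\operatorname{lrmax},\operatorname{lrmin},\operatorname{rlmax},\operatorname{rlmin}$ count these. *)

(* Defs.v *)
From HB Require Import structures.
From mathcomp Require Import all_boot all_order all_algebra all_fingroup.
Set Implicit Arguments. Unset Strict Implicit. Unset Printing Implicit Defensive.
Import GRing.Theory.

(* A permutation pi : 'S_n is read as the word pi(0) pi(1) ... pi(n-1)
   (values 0-based; all statistics and pattern containment only depend on
   relative order, so this is the same as the 1-based convention). *)
Definition word n (pi : 'S_n) : seq nat := [seq val (pi i) | i <- enum 'I_n].

Definition contains (tau : seq nat) n (pi : 'S_n) : bool :=
  [exists f : {ffun 'I_(size tau) -> 'I_n},
     [forall a : 'I_(size tau), forall b : 'I_(size tau),
        ((a < b)%N ==> (f a < f b)%N) &&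
        (((pi (f a) : nat) < pi (f b))%N == (nth 0 tau a < nth 0 tau b)%N)]].

Definition avoids (tau : seq nat) n (pi : 'S_n) : bool := ~~ contains tau pi.

Definition asc_w (w : seq nat) : nat :=
  count (fun j => nth 0 w j < nth 0 w j.+1) (iota 0 (size w).-1).
Definition des_w (w : seq nat) : nat :=
  count (fun j => nth 0 w j > nth 0 w j.+1) (iota 0 (size w).-1).
Definition lrmax_w (w : seq nat) : nat :=
  count (fun j => all (fun k => nth 0 w k < nth 0 w j) (iota 0 j)) (iota 0 (size w)).
Definition lrmin_w (w : seq nat) : nat :=
  count (fun j => all (fun k => nth 0 w k > nth 0 w j) (iota 0 j)) (iota 0 (size w)).
Definition rlmax_w (w : seq nat) : nat :=
  count (fun j => all (fun k => nth 0 w k < nth 0 w j) (iota j.+1 (size w - j.+1)))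
        (iota 0 (size w)).
Definition rlmin_w (w : seq nat) : nat :=
  count (fun j => all (fun k => nth 0 w k > nth 0 w j) (iota j.+1 (size w - j.+1)))
        (iota 0 (size w)).

Definition asc n (pi : 'S_n) := asc_w (word pi).
Definition des n (pi : 'S_n) := des_w (word pi).
Definition lrmax n (pi : 'S_n) := lrmax_w (word pi).
Definition lrmin n (pi : 'S_n) := lrmin_w (word pi).
Definition rlmax n (pi : 'S_n) := rlmax_w (word pi).
Definition rlmin n (pi : 'S_n) := rlmin_w (word pi).

Local Open Scope ring_scope.

Definition coefF (R : comNzRingType) (p q u v s t : R) (n : nat) : R :=
  \sum_(pi : 'S_n | avoids [:: 2; 1; 3] pi && avoids [:: 3; 1; 2] pi)
     p ^+ asc pi * q ^+ des pi * u ^+ lrmax pi * v ^+ rlmax pi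
       * s ^+ lrmin pi * t ^+ rlmin pi.

Definition Ftrunc (R : comNzRingType) (p q u v s t : R) (N : nat) : {poly R} :=
  \sum_(n < N) (coefF p q u v s t n)%:P * 'X^n.

(* Main.v *)
Require Import Defs.
From mathcomp Require Import all_boot all_order all_algebra all_fingroup.
From mathcomp Require Import zify ring.
Set Implicit Arguments. Unset Strict Implicit. Unset Printing Implicit Defensive.

Module M1.

Lemma iotaS1 m n : iota m.+1 n = map S (iota m n).
Proof. by rewrite -add1n iotaDl. Qed.

Lemma count_iotaS (P : pred nat) n :
  count P (iota 0 n.+1) = P 0 + count (fun j => P j.+1) (iota 0 n).
Proof. by rewrite /= iotaS1 count_map. Qed.

Lemma all_iotaS (P : pred nat) m n :
  all P (iota m n.+1) = P m && all (fun j => P j.+1) (iota m n).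
Proof. by rewrite /= iotaS1 all_map. Qed.

Lemma all_shift (P : pred nat) m n :
  all P (iota m.+1 n) = all (fun j => P j.+1) (iota m n).
Proof. by rewrite iotaS1 all_map. Qed.

Lemma count_iota_last (P : pred nat) n :
  count P (iota 0 n.+1) = count P (iota 0 n) + P n.
Proof. by rewrite -addn1 iotaD count_cat /= addn0. Qed.

Lemma all_iota_last (P : pred nat) m n :
  all P (iota m n.+1) = all P (iota m n) && P (m + n).
Proof. by rewrite -addn1 iotaD all_cat /= andbT. Qed.

Definition ascF (g : nat -> nat) n := count (fun j => g j < g j.+1) (iota 0 n.-1).
Definition desF (g : nat -> nat) n := count (fun j => g j > g j.+1) (iota 0 n.-1).
Definition lrmaxF (g : nat -> nat) n :=
  count (fun j => all (fun k => g k < g j) (iota 0 j)) (iota 0 n).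
Definition lrminF (g : nat -> nat) n :=
  count (fun j => all (fun k => g k > g j) (iota 0 j)) (iota 0 n).
Definition rlmaxF (g : nat -> nat) n :=
  count (fun j => all (fun k => g k < g j) (iota j.+1 (n - j.+1))) (iota 0 n).
Definition rlminF (g : nat -> nat) n :=
  count (fun j => all (fun k => g k > g j) (iota j.+1 (n - j.+1))) (iota 0 n).

Section Cong.
Variables (g1 g2 : nat -> nat) (n : nat).
Hypothesis E : forall i, i < n -> g1 i = g2 i.

Lemma ascF_eq : ascF g1 n = ascF g2 n.
Proof.
apply: eq_in_count => j; rewrite mem_iota => /andP[_ Hj].
by rewrite !E //; lia.
Qed.
Lemma desF_eq : desF g1 n = desF g2 n.
Proof.
apply: eq_in_count => j; rewrite mem_iota => /andP[_ Hj].
by rewrite !E //; lia.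
Qed.
Lemma lrmaxF_eq : lrmaxF g1 n = lrmaxF g2 n.
Proof.
apply: eq_in_count => j; rewrite mem_iota => /andP[_ Hj].
apply: eq_in_all => k; rewrite mem_iota => /andP[_ Hk].
by rewrite !E //; lia.
Qed.
Lemma lrminF_eq : lrminF g1 n = lrminF g2 n.
Proof.
apply: eq_in_count => j; rewrite mem_iota => /andP[_ Hj].
apply: eq_in_all => k; rewrite mem_iota => /andP[_ Hk].
by rewrite !E //; lia.
Qed.
Lemma rlmaxF_eq : rlmaxF g1 n = rlmaxF g2 n.
Proof.
apply: eq_in_count => j; rewrite mem_iota => /andP[_ Hj].
apply: eq_in_all => k; rewrite mem_iota => /andP[Hk1 Hk].
by rewrite !E //; lia.
Qed.
Lemma rlminF_eq : rlminF g1 n = rlminF g2 n.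
Proof.
apply: eq_in_count => j; rewrite mem_iota => /andP[_ Hj].
apply: eq_in_all => k; rewrite mem_iota => /andP[Hk1 Hk].
by rewrite !E //; lia.
Qed.
End Cong.

Definition fr (g : nat -> nat) := fun j => if j is j'.+1 then (g j').+1 else 0.
Definition bk (g : nat -> nat) n := fun j => if j < n then (g j).+1 else 0.

Lemma nth_front w j : j <= size w -> nth 0 (0 :: map S w) j = fr (nth 0 w) j.
Proof. by case: j => //= j Hj; rewrite (nth_map 0). Qed.

Lemma nth_back w j : j <= size w ->
  nth 0 (rcons (map S w) 0) j = bk (nth 0 w) (size w) j.
Proof.
move=> Hj; rewrite nth_rcons size_map /bk; case: ifP => H; first by rewrite (nth_map 0).
by have -> : j == size w by lia.
Qed.

Section Front.
Variables (g : nat -> nat) (n : nat).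
Hypothesis n0 : 0 < n.
Lemma asc_fr : ascF (fr g) n.+1 = (ascF g n).+1.
Proof. case: n n0 => // m _; by rewrite /ascF /= iotaS1 count_map. Qed.
Lemma des_fr : desF (fr g) n.+1 = desF g n.
Proof. case: n n0 => // m _; by rewrite /desF /= iotaS1 count_map. Qed.
Lemma lrmax_fr : lrmaxF (fr g) n.+1 = (lrmaxF g n).+1.
Proof.
rewrite /lrmaxF count_iotaS /= add1n; congr (_.+1); apply: eq_count => j.
by rewrite /= all_shift.
Qed.
Lemma lrmin_fr : lrminF (fr g) n.+1 = 1.
Proof.
rewrite /lrminF count_iotaS /= -[RHS]addn0; congr (_ + _).
apply/eqP; rewrite -leqn0 leqNgt -has_count; apply/hasP => -[j _ /=].
by [].
Qed.
Lemma rlmax_fr : rlmaxF (fr g) n.+1 = rlmaxF g n.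
Proof.
rewrite /rlmaxF count_iotaS /=.
have -> : all (fun k => fr g k < 0) (iota 1 (n - 0)) = false.
  by case: n n0 => // m _; rewrite subn0.
rewrite add0n; apply: eq_count => j /=; by rewrite all_shift.
Qed.
Lemma rlmin_fr : rlminF (fr g) n.+1 = (rlminF g n).+1.
Proof.
rewrite /rlminF count_iotaS /=.
have -> : all (fun k => 0 < fr g k) (iota 1 (n - 0)) = true.
  by apply/allP => k; rewrite mem_iota; case: k.
rewrite add1n; congr (_.+1); apply: eq_count => j /=; by rewrite all_shift.
Qed.
End Front.

Section Back.
Variables (g : nat -> nat) (n : nat).
Hypothesis n0 : 0 < n.
Local Notation b := (bk g n).
Lemma asc_bk : ascF b n.+1 = ascF g n.
Proof.
rewrite /ascF succnK; case: n n0 => // m _; rewrite succnK count_iota_last /bk ltnn ltnSn /= addn0.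
apply: eq_in_count => j; rewrite mem_iota => /andP[_ Hj].
by rewrite ifT ?ifT //; lia.
Qed.
Lemma des_bk : desF b n.+1 = (desF g n).+1.
Proof.
rewrite /desF succnK; case: n n0 => // m _; rewrite succnK count_iota_last /bk ltnn ltnSn /= addn1.
congr (_.+1); apply: eq_in_count => j; rewrite mem_iota => /andP[_ Hj].
by rewrite ifT ?ifT //; lia.
Qed.
Lemma lrmax_bk : lrmaxF b n.+1 = lrmaxF g n.
Proof.
rewrite /lrmaxF count_iota_last.
have -> : all (fun k => b k < b n) (iota 0 n) = false.
  by case: n n0 => // m _; rewrite /= /bk ltnn.
rewrite addn0; apply: eq_in_count => j; rewrite mem_iota => /andP[_ Hj].
apply: eq_in_all => k; rewrite mem_iota => /andP[_ Hk].
by rewrite /bk ifT ?ifT //; lia.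
Qed.
Lemma lrmin_bk : lrminF b n.+1 = (lrminF g n).+1.
Proof.
rewrite /lrminF count_iota_last.
have -> : all (fun k => b k > b n) (iota 0 n) = true.
  apply/allP => k; rewrite mem_iota => /andP[_ Hk]; by rewrite /bk ltnn Hk.
rewrite addn1; congr (_.+1); apply: eq_in_count => j; rewrite mem_iota => /andP[_ Hj].
apply: eq_in_all => k; rewrite mem_iota => /andP[_ Hk].
by rewrite /bk ifT ?ifT //; lia.
Qed.
Lemma rlmax_bk : rlmaxF b n.+1 = (rlmaxF g n).+1.
Proof.
rewrite /rlmaxF count_iota_last subnn /= addn1; congr (_.+1).
apply: eq_in_count => j; rewrite mem_iota => /andP[_ Hj].
have -> : n.+1 - j.+1 = (n - j.+1).+1 by lia.
rewrite all_iota_last.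
have -> : j.+1 + (n - j.+1) = n by lia.
rewrite [bk g n n]/bk ltnn [bk g n j]/bk ifT; last lia. rewrite andbT.
apply: eq_in_all => k; rewrite mem_iota => /andP[Hk1 Hk].
by rewrite /bk ifT ?ifT //; lia.
Qed.
Lemma rlmin_bk : rlminF b n.+1 = 1.
Proof.
rewrite /rlminF count_iota_last subnn /= -[RHS]add0n; congr (_ + _).
apply/eqP; rewrite -leqn0 leqNgt -has_count; apply/hasP => -[j].
rewrite mem_iota => /andP[_ Hj] /=.
have -> : n.+1 - j.+1 = (n - j.+1).+1 by lia.
rewrite all_iota_last.
have -> : j.+1 + (n - j.+1) = n by lia.
by rewrite /bk ltnn andbF.
Qed.
End Back.

End M1.
Import M1.

Module M2.

Lemma ascE w : asc_w w = ascF (nth 0 w) (size w). Proof. by []. Qed.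
Lemma desE w : des_w w = desF (nth 0 w) (size w). Proof. by []. Qed.
Lemma lrmaxE w : lrmax_w w = lrmaxF (nth 0 w) (size w). Proof. by []. Qed.
Lemma lrminE w : lrmin_w w = lrminF (nth 0 w) (size w). Proof. by []. Qed.
Lemma rlmaxE w : rlmax_w w = rlmaxF (nth 0 w) (size w). Proof. by []. Qed.
Lemma rlminE w : rlmin_w w = rlminF (nth 0 w) (size w). Proof. by []. Qed.

Lemma size_front w : size (0 :: map S w) = (size w).+1.
Proof. by rewrite /= size_map. Qed.
Lemma size_back w : size (rcons (map S w) 0) = (size w).+1.
Proof. by rewrite size_rcons size_map. Qed.

Lemma front_eqs w i : i < (size w).+1 -> nth 0 (0 :: map S w) i = fr (nth 0 w) i.
Proof. by move=> h; apply: nth_front. Qed.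
Lemma back_eqs w i : i < (size w).+1 ->
  nth 0 (rcons (map S w) 0) i = bk (nth 0 w) (size w) i.
Proof. by move=> h; apply: nth_back. Qed.

Section FB.
Variable w : seq nat.
Hypothesis h : 0 < size w.
Lemma asc_front : asc_w (0 :: map S w) = (asc_w w).+1.
Proof. by rewrite ascE size_front (ascF_eq (@front_eqs w)) asc_fr. Qed.
Lemma des_front : des_w (0 :: map S w) = des_w w.
Proof. by rewrite desE size_front (desF_eq (@front_eqs w)) des_fr. Qed.
Lemma lrmax_front : lrmax_w (0 :: map S w) = (lrmax_w w).+1.
Proof. by rewrite lrmaxE size_front (lrmaxF_eq (@front_eqs w)) lrmax_fr. Qed.
Lemma lrmin_front : lrmin_w (0 :: map S w) = 1.
Proof. by rewrite lrminE size_front (lrminF_eq (@front_eqs w)) lrmin_fr. Qed.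
Lemma rlmax_front : rlmax_w (0 :: map S w) = rlmax_w w.
Proof. by rewrite rlmaxE size_front (rlmaxF_eq (@front_eqs w)) rlmax_fr. Qed.
Lemma rlmin_front : rlmin_w (0 :: map S w) = (rlmin_w w).+1.
Proof. by rewrite rlminE size_front (rlminF_eq (@front_eqs w)) rlmin_fr. Qed.

Lemma asc_back : asc_w (rcons (map S w) 0) = asc_w w.
Proof. by rewrite ascE size_back (ascF_eq (@back_eqs w)) asc_bk. Qed.
Lemma des_back : des_w (rcons (map S w) 0) = (des_w w).+1.
Proof. by rewrite desE size_back (desF_eq (@back_eqs w)) des_bk. Qed.
Lemma lrmax_back : lrmax_w (rcons (map S w) 0) = lrmax_w w.
Proof. by rewrite lrmaxE size_back (lrmaxF_eq (@back_eqs w)) lrmax_bk. Qed.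
Lemma lrmin_back : lrmin_w (rcons (map S w) 0) = (lrmin_w w).+1.
Proof. by rewrite lrminE size_back (lrminF_eq (@back_eqs w)) lrmin_bk. Qed.
Lemma rlmax_back : rlmax_w (rcons (map S w) 0) = (rlmax_w w).+1.
Proof. by rewrite rlmaxE size_back (rlmaxF_eq (@back_eqs w)) rlmax_bk. Qed.
Lemma rlmin_back : rlmin_w (rcons (map S w) 0) = 1.
Proof. by rewrite rlminE size_back (rlminF_eq (@back_eqs w)) rlmin_bk. Qed.
End FB.

End M2.
Import M2.

Module M3.
Import GRing.Theory.
Local Open Scope ring_scope.

Section Alg.
Variables (R : comNzRingType) (p q u v s t : R) (c : nat -> R) (T : nat -> R -> R -> R).
Hypothesis Trec : forall m x y, T m.+1 x y = p*u*x*y * T m 1 y + q*v*x*y * T m x 1.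
Hypothesis T0 : forall x y, T 0 x y = u*v*x*y.
Hypothesis c0 : c 0%N = 1.
Hypothesis cS : forall k, c k.+1 = T k s t.

Lemma coef_trunc N k : (k < N)%N -> (\sum_(n < N) (c n)%:P * 'X^n)`_k = c k.
Proof.
move=> Hk; rewrite coef_sum (bigD1 (Ordinal Hk)) //= coefCM coefXn eqxx mulr1 big1 ?addr0 //.
move=> i /negbTE Hi; rewrite coefCM coefXn; case: eqP => [E|]; last by rewrite mulr0.
by move: Hi; rewrite -val_eqE /= E eqxx.
Qed.

Lemma coefCXn (a : R) n k : (a%:P * 'X^n)`_k = if k == n then a else 0.
Proof. by rewrite coefCM coefXn; case: eqP; rewrite ?mulr1 ?mulr0. Qed.

Lemma coefPCX (P : {poly R}) (d : R) k n :
  (P * (d%:P * 'X^k))`_n = if (n < k)%N then 0 else P`_(n - k) * d.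
Proof. by rewrite mulrA coefMXn coefMC. Qed.

Lemma coef4 (P : {poly R}) (d0 d1 d2 d3 : R) n :
  (P * (d0%:P + d1%:P * 'X^1 + d2%:P * 'X^2 + d3%:P * 'X^3))`_n =
  P`_n * d0 + (if (n < 1)%N then 0 else P`_(n - 1) * d1)
  + (if (n < 2)%N then 0 else P`_(n - 2) * d2) + (if (n < 3)%N then 0 else P`_(n - 3) * d3).
Proof. by rewrite !mulrDr !coefD !coefPCX coefMC. Qed.

Lemma coef5 (d0 d1 d2 d3 d4 : R) n :
  (d0%:P + d1%:P * 'X^1 + d2%:P * 'X^2 + d3%:P * 'X^3 + d4%:P * 'X^4)`_n =
  (if n == 0%N then d0 else 0) + (if n == 1%N then d1 else 0) + (if n == 2%N then d2 else 0)
  + (if n == 3%N then d3 else 0) + (if n == 4%N then d4 else 0).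
Proof. by rewrite !coefD !coefCXn coefC. Qed.

Theorem alg (N n : nat) : (n < N)%N ->
  let X : {poly R} := 'X in
  let A := (p * t * u)%:P * X in
  let B := (p * u)%:P * X + (q * v)%:P * X in
  let C := (q * s * v)%:P * X in
  ((\sum_(n < N) (c n)%:P * 'X^n) * ((-1 + A) * (-1 + B) * (-1 + C)))`_n =
  ( (1 + (u * v * s * t)%:P * X) * ((-1 + A) * (-1 + B) * (-1 + C))
    + (p * q * s * t ^+ 2 * u ^+ 2 * v ^+ 2)%:P * X ^+ 3 * (-1 + C)
    - (q * s ^+ 2 * t * u * v ^+ 2)%:P * X ^+ 2 * ((-1 + A) * (-1 + B))
    - (p * s * t ^+ 2 * u ^+ 2 * v)%:P * X ^+ 2 * ((-1 + B) * (-1 + C))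
    + (p * q * s ^+ 2 * t * u ^+ 2 * v ^+ 2)%:P * X ^+ 3 * (-1 + A) )`_n.
Proof.
move=> Hn X A B C.
set a := p * t * u. set b := p * u + q * v. set cc := q * s * v.
set P := \sum_(n < N) _.
set e := u * v * s * t.
set al := p * q * s * t ^+ 2 * u ^+ 2 * v ^+ 2.
set be := q * s ^+ 2 * t * u * v ^+ 2.
set ga := p * s * t ^+ 2 * u ^+ 2 * v.
set de := p * q * s ^+ 2 * t * u ^+ 2 * v ^+ 2.
set d0 : R := -1. set d1 := a + b + cc. set d2 := - (a*b + b*cc + cc*a). set d3 := a*b*cc.
have ED : (-1 + A) * (-1 + B) * (-1 + C) =
   d0%:P + d1%:P * 'X^1 + d2%:P * 'X^2 + d3%:P * 'X^3.
  rewrite /A /B /C /X /a /b /cc /d0 /d1 /d2 /d3 !(polyCD, polyCM, polyCN, polyC1). ring.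
have ER : (1 + e%:P * X) * ((-1 + A) * (-1 + B) * (-1 + C)) + al%:P * X ^+ 3 * (-1 + C)
    - be%:P * X ^+ 2 * ((-1 + A) * (-1 + B)) - ga%:P * X ^+ 2 * ((-1 + B) * (-1 + C))
    + de%:P * X ^+ 3 * (-1 + A) =
   d0%:P + (d1 + e * d0)%:P * 'X^1 + (d2 + e * d1 - be - ga)%:P * 'X^2
   + (d3 + e * d2 - al + be * (a + b) + ga * (b + cc) - de)%:P * 'X^3
   + (e * d3 + al * cc - be * a * b - ga * b * cc + de * a)%:P * 'X^4.
  rewrite /A /B /C /X /a /b /cc /d0 /d1 /d2 /d3 !(polyCD, polyCM, polyCN, polyC1). ring.
rewrite ER ED coef4 coef5.
case: n Hn => [|[|[|[|[|m]]]]] Hn /=.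
all: rewrite ?coef_trunc ?c0 ?cS; try lia.
all: rewrite ?Trec ?T0 /d0 /d1 /d2 /d3 /e /al /be /ga /de /a /b /cc.
all: ring.
Qed.
End Alg.

End M3.
Import M3.

Module M4.
Import GRing.Theory.

Fixpoint W (b : seq bool) : seq nat :=
  match b with
  | [::] => [:: 0]
  | true :: b' => 0 :: map S (W b')
  | false :: b' => rcons (map S (W b')) 0
  end.

Fixpoint bits m : seq (seq bool) :=
  if m is m'.+1 then map (cons true) (bits m') ++ map (cons false) (bits m')
  else [:: [::]].

Lemma size_W b : size (W b) = (size b).+1.
Proof. elim: b => [|[] b IH] //=; by rewrite ?size_rcons size_map IH. Qed.

Lemma W_gt0 b : 0 < size (W b). Proof. by rewrite size_W. Qed.

Local Open Scope ring_scope.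
Section Wt.
Variables (R : comNzRingType) (p q u v : R).
Definition Gw (x y : R) (w : seq nat) : R :=
  p ^+ asc_w w * q ^+ des_w w * u ^+ lrmax_w w * v ^+ rlmax_w w * x ^+ lrmin_w w * y ^+ rlmin_w w.
Definition T m x y := \sum_(b <- bits m) Gw x y (W b).

Lemma T_rec m x y : T m.+1 x y = p*u*x*y * T m 1 y + q*v*x*y * T m x 1.
Proof.
rewrite /T /= big_cat !big_map !big_distrr /=; congr (_ + _); apply: eq_bigr => b _ /=.
  rewrite /Gw asc_front ?des_front ?lrmax_front ?lrmin_front ?rlmax_front ?rlmin_front ?W_gt0 //.
  rewrite !exprS expr1n ?expr0; ring.
rewrite /Gw asc_back ?des_back ?lrmax_back ?lrmin_back ?rlmax_back ?rlmin_back ?W_gt0 //.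
rewrite !exprS expr1n ?expr0; ring.
Qed.

Lemma T_0 x y : T 0 x y = u * v * x * y.
Proof. rewrite /T /= big_seq1 /Gw /=. by rewrite !expr0 !expr1 !mul1r. Qed.
End Wt.

End M4.
Import M4.

Module M5.

Lemma size_word n (pi : 'S_n) : size (word pi) = n.
Proof. by rewrite size_map size_enum_ord. Qed.

Lemma word_nth n (pi : 'S_n) (i : 'I_n) : nth 0 (word pi) i = pi i.
Proof. by rewrite /word (nth_map i) ?size_enum_ord // nth_ord_enum. Qed.

Lemma word_nth_nat n (pi : 'S_n) i (Hi : i < n) : nth 0 (word pi) i = pi (Ordinal Hi).
Proof. exact: (word_nth pi (Ordinal Hi)). Qed.

Definition vfree (w : seq nat) := forall i j k, i < j -> j < k -> k < size w ->
  ~~ ((nth 0 w j < nth 0 w i) && (nth 0 w j < nth 0 w k)).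

Lemma contains3 n (pi : 'S_n) (x y z : nat) (I J K : 'I_n) : I < J -> J < K ->
  (pi I < pi J) = (x < y) -> (pi J < pi K) = (y < z) -> (pi I < pi K) = (x < z) ->
  (pi J < pi I) = (y < x) -> (pi K < pi J) = (z < y) -> (pi K < pi I) = (z < x) ->
  contains [:: x; y; z] pi.
Proof.
move=> IJ JK h1 h2 h3 h4 h5 h6.
apply/existsP; exists [ffun a : 'I_3 => nth I [:: I; J; K] a].
apply/forallP => a; apply/forallP => b; rewrite !ffunE.
case: a => [[|[|[|a]]] Ha] //; case: b => [[|[|[|b]]] Hb] //=;
  rewrite ?ltnn ?h1 ?h2 ?h3 ?h4 ?h5 ?h6 ?eqxx ?andbT //=; lia.
Qed.

Lemma avoids_of_vfree n (pi : 'S_n) (x y z : nat) : y < x -> y < z ->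
  vfree (word pi) -> avoids [:: x; y; z] pi.
Proof.
move=> yx yz V; apply/negP => /existsP [f /forallP H].
move: (H (@Ordinal 3 0 isT)) => /forallP /(_ (@Ordinal 3 1 isT)) /andP [/implyP /(_ isT) f01 /eqP e01].
move: (H (@Ordinal 3 1 isT)) => /forallP /(_ (@Ordinal 3 2 isT)) /andP [/implyP /(_ isT) f12 /eqP e12].
rewrite /= in e01 e12.
have ne : pi (f (@Ordinal 3 0 isT)) != pi (f (@Ordinal 3 1 isT)).
  apply/negP => /eqP /perm_inj E; by move: f01; rewrite E ltnn.
have := V _ _ _ f01 f12; rewrite size_word ltn_ord !word_nth => /(_ isT).
move/negP; apply; apply/andP; split; last by rewrite e12; lia.
move: ne e01; rewrite -val_eqE /=; lia.
Qed.

Lemma vfree_of_avoids n (pi : 'S_n) :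
  avoids [:: 2; 1; 3] pi -> avoids [:: 3; 1; 2] pi -> vfree (word pi).
Proof.
move=> A1 A2 i j k ij jk; rewrite size_word => kn.
have jn : j < n by lia. have iN : i < n by lia.
rewrite (word_nth_nat pi iN) (word_nth_nat pi jn) (word_nth_nat pi kn).
apply/negP => /andP [h1 h2].
case: (ltngtP (pi (Ordinal iN)) (pi (Ordinal kn))) => c.
- move/negP: A1; apply; apply: (@contains3 _ _ _ _ _ (Ordinal iN) (Ordinal jn) (Ordinal kn)) => /=; lia.
- move/negP: A2; apply; apply: (@contains3 _ _ _ _ _ (Ordinal iN) (Ordinal jn) (Ordinal kn)) => /=; lia.
- move/val_inj/perm_inj: c => /(congr1 val) /=; lia.
Qed.

Lemma vfree_front w : vfree w -> vfree (0 :: map S w).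
Proof.
move=> V i j k ij jk; rewrite size_front => kn.
rewrite !front_eqs; try lia.
case: i ij => [|i] ij; first by rewrite /= ?ltn0.
case: j ij jk => [|j] // ij jk; case: k jk kn => [|k] // jk kn /=.
rewrite !ltnS; apply: V; lia.
Qed.

Lemma vfree_front_inv w : vfree (0 :: map S w) -> vfree w.
Proof.
move=> V i j k ij jk kn.
have := V i.+1 j.+1 k.+1; rewrite size_front !front_eqs /= ?ltnS; try lia.

Qed.

Lemma vfree_back w : vfree w -> vfree (rcons (map S w) 0).
Proof.
move=> V i j k ij jk; rewrite size_back => kn.
rewrite !back_eqs /bk; try lia.
have -> : i < size w by lia. have -> : j < size w by lia.
case: ifP => kw; last by rewrite ltn0 andbF.
rewrite !ltnS; apply: V; lia.
Qed.

Lemma vfree_back_inv w : vfree (rcons (map S w) 0) -> vfree w.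
Proof.
move=> V i j k ij jk kn.
have := V i j k; rewrite size_back !back_eqs /bk; try lia.
have -> : i < size w by lia. have -> : j < size w by lia. rewrite kn ?ltnS.
apply; lia.
Qed.

Lemma vfree_W b : vfree (W b).
Proof.
elim: b => [|[] b IH] /=; last 2 first.
- exact: vfree_front.
- exact: vfree_back.
move=> i j k ij jk /=; lia.
Qed.

Lemma mem_bits m b : (b \in bits m) = (size b == m).
Proof.
elim: m b => [|m IH] b /=; first by case: b.
rewrite mem_cat; case: b => [|[] b] /=.
- by apply/negbTE; rewrite negb_or; apply/andP; split; apply/mapP => -[].
- rewrite eqSS -IH; apply/orP/idP => [[/mapP [c Hc [->]] // | /mapP [c _ //]] | H].
  by left; apply/mapP; exists b.
- rewrite eqSS -IH; apply/orP/idP => [[/mapP [c _ //] | /mapP [c Hc [->]] //] | H].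
  by right; apply/mapP; exists b.
Qed.

Lemma uniq_bits m : uniq (bits m).
Proof.
elim: m => [|m IH] //=; rewrite cat_uniq !map_inj_uniq // => [|x y [] //|x y [] //].
rewrite IH andbT; apply/hasP => -[c /mapP [d _ ->] /mapP [e _]] //.
Qed.

Lemma W_inj : injective W.
Proof.
elim=> [|x b IH] [|y c] //=.
- by case: y => /= /(congr1 size); rewrite /= ?size_rcons size_map size_W.
- by case: x => /= /(congr1 size); rewrite /= ?size_rcons size_map size_W.
case: x; case: y => /=.
- by case=> /(inj_map succn_inj) /IH ->.
- by case: (W c) (W_gt0 c) => //= a l _ [].
- by case: (W b) (W_gt0 b) => //= a l _ [].
- by move/rcons_inj => [] /(inj_map succn_inj) /IH ->.
Qed.

Lemma perm_W b : perm_eq (W b) (iota 0 (size b).+1).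
Proof.
elim: b => [|[] b IH] //.
  change (perm_eq (0 :: map S (W b)) (0 :: iota 1 (size b).+1)).
  by rewrite perm_cons iotaS1; apply: perm_map.
change (perm_eq (rcons (map S (W b)) 0) (0 :: iota 1 (size b).+1)).
by rewrite perm_rcons perm_cons iotaS1; apply: perm_map.
Qed.

Lemma shift_down w n : perm_eq w (iota 1 n) ->
  map S (map predn w) = w /\ perm_eq (map predn w) (iota 0 n).
Proof.
move=> H; split.
  rewrite -map_comp map_id_in // => x Hx /=.
  by move: Hx; rewrite (perm_mem H) mem_iota => /andP [h _]; rewrite prednK.
have := perm_map predn H; rewrite iotaS1 -map_comp.
have E : map (predn \o succn) (iota 0 n) = iota 0 n by elim: (iota 0 n) => //= a l ->.
by rewrite E.
Qed.

Lemma vfree_char n w : perm_eq w (iota 0 n.+1) -> vfree w ->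
  exists2 b, size b = n & w = W b.
Proof.
elim: n w => [|n IH] w Hp V.
  exists [::] => //.
  have := perm_size Hp; have := perm_mem Hp 0.
  case: w {Hp V} => [|x [|]] //= E _; move: E; rewrite !inE /= => /eqP <- //.
have sw : size w = n.+2 by rewrite (perm_size Hp) size_iota.
case x0: (nth 0 w 0 == 0).
  case: w Hp V x0 sw => [|a w1] //= Hp V /eqP a0 sw; subst a.
  have Hp1 : perm_eq w1 (iota 1 n.+1) by rewrite -(perm_cons 0).
  have [E1 E2] := shift_down Hp1.
  rewrite -E1 in V; have V2 := vfree_front_inv V.
  have [b sb Eb] := IH _ E2 V2.
  by exists (true :: b); rewrite /= ?sb // -Eb E1.
case y0: (nth 0 w n.+1 == 0).
  case/lastP: w Hp V x0 y0 sw => [|w3 a] //= Hp V x0; rewrite size_rcons => y0 [sw].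
  rewrite nth_rcons sw ltnn eqxx in y0; move/eqP: y0 => y0; subst a.
  have Hp1 : perm_eq w3 (iota 1 n.+1).
    by rewrite -(perm_cons 0) -perm_rcons.
  have [E1 E2] := shift_down Hp1.
  rewrite -E1 in V; have V2 := vfree_back_inv V.
  have [b sb Eb] := IH _ E2 V2.
  by exists (false :: b); rewrite /= ?sb // -Eb E1.
have w0 : 0 \in w by rewrite (perm_mem Hp) mem_iota.
have ji := nth_index 0 w0.
have jl : index 0 w < size w by rewrite index_mem.
have j0 : 0 < index 0 w.
  by case: (index 0 w) ji => // E; rewrite E eqxx in x0.
have j1 : index 0 w < n.+1.
  rewrite ltn_neqAle; apply/andP; split; last by lia.
  by apply/eqP => E; rewrite -E ji eqxx in y0.
have := V 0 (index 0 w) n.+1 j0 j1; rewrite sw ji => /(_ (ltnSn _)).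
by rewrite !lt0n x0 y0.
Qed.

End M5.
Import M5.

Module M6.
Import GRing.Theory.

Lemma word_inj n : injective (@word n).
Proof. move=> p1 p2 E; apply/permP => i; have := congr1 (fun w => nth 0 w i) E; rewrite /= !word_nth; exact: val_inj. Qed.

Lemma perm_word n (pi : 'S_n) : perm_eq (word pi) (iota 0 n).
Proof.
apply: uniq_perm; rewrite ?iota_uniq //.
  rewrite map_inj_uniq ?enum_uniq // => i j /val_inj; exact: perm_inj.
move=> x; rewrite mem_iota add0n /=; apply/mapP/idP.
  by case=> i _ ->; apply: ltn_ord.
move=> h; exists (perm_inv pi (Ordinal h)); rewrite ?mem_enum //.
by rewrite permKV.
Qed.

Lemma word_of_perm n w : perm_eq w (iota 0 n) -> exists pi : 'S_n, word pi = w.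
Proof.
move=> H.
have U : uniq w by rewrite (perm_uniq H) iota_uniq.
have sw : size w = n by rewrite (perm_size H) size_iota.
have lt : forall i, i < n -> nth 0 w i < n.
  move=> i hi; have : nth 0 w i \in w by rewrite mem_nth // sw.
  by rewrite (perm_mem H) mem_iota.
pose f (i : 'I_n) : 'I_n := Ordinal (lt i (ltn_ord i)).
have fi : injective f.
  move=> i j /(congr1 val) /= /eqP; rewrite nth_uniq ?sw // => /eqP; exact: val_inj.
exists (perm fi); rewrite /word.
rewrite (eq_map (g := fun i : 'I_n => nth 0 w i)); last by move=> i; rewrite permE.
have -> : [seq nth 0 w i | i : 'I_n <- enum 'I_n] = map (nth 0 w) (map val (enum 'I_n)) by rewrite -map_comp.
by rewrite val_enum_ord -sw -/(mkseq _ _) mkseq_nth.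
Qed.

Definition Pav n (pi : 'S_n) := avoids [:: 2; 1; 3] pi && avoids [:: 3; 1; 2] pi.

Lemma perm_lists n :
  perm_eq [seq word pi | pi <- [seq pi <- index_enum 'S_n.+1 | Pav pi]] [seq W b | b <- bits n].
Proof.
apply: uniq_perm.
- by rewrite map_inj_uniq ?filter_uniq ?index_enum_uniq //; apply: word_inj.
- by rewrite map_inj_uniq ?uniq_bits //; apply: W_inj.
move=> w; apply/mapP/mapP.
  case=> pi; rewrite mem_filter => /andP [/andP [A1 A2] _] ->.
  have [b sb Eb] := vfree_char (perm_word pi) (vfree_of_avoids A1 A2).
  by exists b; rewrite ?mem_bits ?sb.
case=> b; rewrite mem_bits => /eqP sb ->.
have := perm_W b; rewrite sb => /word_of_perm [pi Epi].
exists pi => //; rewrite mem_filter mem_index_enum andbT /Pav.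
by rewrite !avoids_of_vfree // Epi; apply: vfree_W.
Qed.

Local Open Scope ring_scope.

Lemma coefF_S (R : comNzRingType) (p q u v s t : R) n :
  coefF p q u v s t n.+1 = T p q u v n s t.
Proof.
rewrite /coefF.
transitivity (\sum_(pi : 'S_n.+1 | Pav pi) Gw p q u v s t (word pi)) => //.
rewrite -big_filter -(big_map (@word _) xpredT) (perm_big _ (perm_lists n)) big_map.
by [].
Qed.

Lemma coefF_0 (R : comNzRingType) (p q u v s t : R) : coefF p q u v s t 0 = 1.
Proof.
rewrite /coefF (big_pred1 (1%g : 'S_0)) => [|pi].
  rewrite /asc /des /lrmax /rlmax /lrmin /rlmin.
  have -> : word (1%g : 'S_0) = [::] by apply/size0nil; rewrite size_word.
  by rewrite /= !expr0 !mulr1.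
have -> : pi = 1%g by apply/permP => -[].
rewrite /= eqxx /avoids /contains; apply/andP; split; apply/negP => /existsP [f _].
  by case: (f (@Ordinal 3 0 isT)).
by case: (f (@Ordinal 3 0 isT)).
Qed.


End M6.
Import M6.

Import GRing.Theory.
Local Open Scope ring_scope.

Theorem theorem11 (R : comNzRingType) (p q u v s t : R) (N n : nat) :
  (n < N)%N ->
  let X : {poly R} := 'X in
  let A := (p * t * u)%:P * X in
  let B := (p * u)%:P * X + (q * v)%:P * X in
  let C := (q * s * v)%:P * X in
  (Ftrunc p q u v s t N * ((-1 + A) * (-1 + B) * (-1 + C)))`_n =
  ( (1 + (u * v * s * t)%:P * X) * ((-1 + A) * (-1 + B) * (-1 + C))
    + (p * q * s * t ^+ 2 * u ^+ 2 * v ^+ 2)%:P * X ^+ 3 * (-1 + C)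
    - (q * s ^+ 2 * t * u * v ^+ 2)%:P * X ^+ 2 * ((-1 + A) * (-1 + B))
    - (p * s * t ^+ 2 * u ^+ 2 * v)%:P * X ^+ 2 * ((-1 + B) * (-1 + C))
    + (p * q * s ^+ 2 * t * u ^+ 2 * v ^+ 2)%:P * X ^+ 3 * (-1 + A) )`_n.
Proof.
move=> Hn; rewrite /Ftrunc.
apply: (@alg R p q u v s t (coefF p q u v s t) (T p q u v)) => //.
- exact: T_rec.
- exact: T_0.
- exact: coefF_0.
- exact: coefF_S.
Qed.
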